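(* Let $n\ge 3$, let $F$ be a set of edges of $Q_n$, and let $T$ be a proper subset of the vertex set of $Q_n$ with $|T|\ge 3$ such that every edge of $Q_n$ joining a vertex of parity 0 in $T$ to a vertex outside $T$ belongs to $F$. If $|T|_0>|T|_1$, then $F$ is not minimal.
   Context: $Q_n$ is the $n$-dimensional hypercube on the binary strings of length $n$, two strings adjacent iff they differ in exactly one bit. The parity of a vertex is the number of ones in its label modulo 2. For a set $T$ of vertices, $|T|_0$ and $|T|_1$ denote the numbers of vertices of parity 0 and parity 1 in $T$. $F$ is a set of ''faulty'' edges; $Q_n-F$ is the graph with all vertices of $Q_n$ and the edges of $Q_n$ not in $F$. ''$F$ is not minimal'' means that there is a proper subset $F'\subsetneq F$ such that $Q_n-F'$ has no Hamiltonian cycle. *)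

(* Defs.v *)
From mathcomp Require Import all_boot.
Set Implicit Arguments. Unset Strict Implicit. Unset Printing Implicit Defensive.

Definition vtx (n : nat) := {ffun 'I_n -> bool}.

Definition qadj (n : nat) : rel (vtx n) :=
  fun u v => #|[set i | u i != v i]| == 1.

Definition qedges (n : nat) : {set {set vtx n}} :=
  [set E | [exists u, exists v, qadj u v && (E == [set u; v])]].

Definition parity (n : nat) (u : vtx n) : bool := odd #|[set i | u i]|.

Definition cardT0 (n : nat) (T : {set vtx n}) := #|[set u in T | ~~ parity u]|.
Definition cardT1 (n : nat) (T : {set vtx n}) := #|[set u in T | parity u]|.

Definition qadj_minus (n : nat) (F : {set {set vtx n}}) : rel (vtx n) :=
  fun u v => qadj u v && ([set u; v] \notin F).

Definition ham_cycle (V : finType) (e : rel V) (c : seq V) : Prop :=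
  [/\ uniq c, cycle e c, 2 < size c & forall x : V, x \in c].

Definition hamiltonian (V : finType) (e : rel V) : Prop :=
  exists c : seq V, ham_cycle e c.

Definition not_minimal (n : nat) (F : {set {set vtx n}}) : Prop :=
  exists F' : {set {set vtx n}}, F' \proper F /\ ~ hamiltonian (qadj_minus F').

(* Main.v *)
Require Import Defs.
From mathcomp Require Import all_boot.
Set Implicit Arguments. Unset Strict Implicit.

Lemma qadj_flip n (u v : vtx n) : qadj u v ->
  exists j, forall i, v i = (if i == j then ~~ u i else u i).
Proof.
move/cards1P=> [j Hj]; exists j => i.
move/setP: Hj => /(_ i); rewrite !inE.
by case: (i == j); case: (u i); case: (v i).
Qed.

Lemma parity_adj n (u v : vtx n) : qadj u v -> parity v = ~~ parity u.
Proof.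
move=> /qadj_flip [j Hv]; rewrite /parity.
case Huj: (u j).
- have -> : [set i | v i] = [set i | u i] :\ j.
    by apply/setP=> i; rewrite !inE Hv; case: (i =P j) => [->|]; rewrite ?Huj.
  by rewrite [in RHS](cardsD1 j) inE Huj /= negbK.
- have -> : [set i | v i] = j |: [set i | u i].
    by apply/setP=> i; rewrite !inE Hv; case: (i =P j) => [->|]; rewrite ?Huj ?eqxx.
  by rewrite cardsU1 inE Huj.
Qed.

Lemma qadj_sym n (u v : vtx n) : qadj u v = qadj v u.
Proof.
rewrite /qadj; congr (_ == 1); apply: eq_card => i; by rewrite !inE eq_sym.
Qed.

Definition flip n (u : vtx n) (j : 'I_n) : vtx n :=
  [ffun i => if i == j then ~~ u i else u i].

Lemma flipK n j : involutive (@flip n ^~ j).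
Proof.
move=> u; apply/ffunP=> i; rewrite !ffunE; case: (i == j) => //; exact: negbK.
Qed.

Lemma qadj_flipr n (u : vtx n) j : qadj u (flip u j).
Proof.
rewrite /qadj; apply/cards1P; exists j; apply/setP=> i.
rewrite !inE ffunE; case: (i == j) => //; by case: (u i).
Qed.

Lemma next_next_small (T : eqType) (c : seq T) x :
  uniq c -> x \in c -> next c (next c x) = x -> size c <= 2.
Proof.
move=> Uc xc; case: (rot_to xc) => i s Hr.
rewrite -(next_rot i Uc) -(next_rot i Uc) Hr -(size_rot i) Hr.
have := Uc; rewrite -(rot_uniq i) Hr.
case: s {Hr} => [|y [|z s]] //= Us.
rewrite eqxx /= eqxx.
move: Us; rewrite !inE; case: (y =P x) => [->|_]; first by rewrite eqxx.
move=> /and3P[/norP[_ /norP[zx _]] _ _] /eqP; by rewrite eq_sym (negbTE zx).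
Qed.

Theorem lemma4 (n : nat) (F : {set {set vtx n}}) (T : {set vtx n}) :
  3 <= n ->
  F \subset qedges n ->
  T \proper [set: vtx n] ->
  3 <= #|T| ->
  (forall u v : vtx n, u \in T -> ~~ parity u -> v \notin T -> qadj u v ->
     [set u; v] \in F) ->
  cardT1 T < cardT0 T ->
  not_minimal F.
Proof.
move=> n3 _ _ _ HF H01.
have key : forall f : vtx n -> vtx n, injective f -> (forall u, qadj u (f u)) ->
    exists2 u, (u \in T) && ~~ parity u & f u \notin T.
  move=> f finj fadj.
  case: (boolP [exists u in [set u in T | ~~ parity u], f u \notin T]).
    by move=> /exists_inP [u]; rewrite inE => Hu Hf; exists u.
  move=> Hn; exfalso; move: H01; apply/negP; rewrite -leqNgt /cardT0 /cardT1.
  rewrite -(card_imset _ finj); apply: subset_leq_card; apply/subsetP=> y.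
  move=> /imsetP [u]; rewrite inE => /andP [uT up] ->.
  rewrite inE (parity_adj (fadj u)) up andbT.
  apply: contraNT Hn => Hfu; apply/exists_inP; exists u => //; by rewrite inE uT.
have j0 : 'I_n by exists 0; apply: leq_trans n3.
have [u0 /andP [u0T u0p] fu0] := key _ (can_inj (flipK j0)) (fun u => qadj_flipr u j0).
set e := [set u0; flip u0 j0].
have eF : e \in F by apply: HF => //; exact: qadj_flipr.
exists (F :\ e); split; first exact: properD1.
move=> [c [Uc Cc Sc Allc]].
have nadj : forall u, qadj_minus (F :\ e) u (next c u) by move=> u; exact: next_cycle Cc (Allc u).
have padj : forall u, qadj_minus (F :\ e) (prev c u) u by move=> u; exact: prev_cycle Cc (Allc u).
have [u /andP [uT up] nu] := key _ (can_inj (prev_next Uc)) (fun u => (andP (nadj u)).1).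
have [u' /andP [u'T u'p] pu'] := key _ (can_inj (next_prev Uc))
   (fun u => ltac:(by rewrite qadj_sym; exact: (andP (padj u)).1)).
have E1 : [set u; next c u] = e.
  have /andP [a b] := nadj u.
  apply/eqP; apply: contraNT b => Hne; rewrite in_setD1 Hne /=; exact: HF.
have E2 : [set prev c u'; u'] = e.
  have /andP [a b] := padj u'.
  rewrite qadj_sym in a.
  apply/eqP; apply: contraNT b => Hne; rewrite in_setD1 Hne /= setUC; exact: HF.
have uu' : u = u'.
  have : u \in [set prev c u'; u'] by rewrite E2 -E1 set21.
  case/set2P => // Hu; by move: pu'; rewrite -Hu uT.
subst u'.
have nup : next c u = prev c u.
  have : next c u \in [set prev c u; u] by rewrite E2 -E1 set22.
  case/set2P => // Hu; by move: nu; rewrite Hu uT.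
have := next_next_small Uc (Allc u); rewrite nup next_prev // => /(_ erefl).
by rewrite leqNgt Sc.
Qed.
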